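(* Let $m\ge1$ and let $(t_{i,j})$ be positive reals with $t_{i+m,j-m}=t_{i,j}$, $t_{i+2,j+2}=t_{i,j}$. Define, for $i\in\mathbb{Z}$ ($m$-periodic sequences) $$a_i=t_{i+1,-i},\quad b_i=t_{i+2,-i+1},\quad c_i=t_{i,-i},\quad d_i=t_{i+1,-i+1},$$ $$x_i=\frac{c_id_{i+1}+c_{i+1}d_i}{a_ib_i},\qquad y_i=\frac{a_{i-1}b_i+a_ib_{i-1}}{c_id_i},$$ for $n\ge1$ $$u_{n,i}=\prod_{\ell=0}^{n-1}x_{i-\ell-1}^{\frac{n+1}{2}-\left|\frac{n-1}{2}-\ell\right|},\qquad v_{n,i}=\prod_{\ell=0}^{n-1}y_{i-\ell-1}^{\frac{n+1}{2}-\left|\frac{n-1}{2}-\ell\right|},$$ with $u_{0,i}=u_{-1,i}=u_{-2,i}=v_{0,i}=v_{-1,i}=v_{-2,i}=1$, and $\theta_{i,j,k}=t_{i+\lfloor k/2\rfloor,\,j+\lfloor k/2\rfloor}$. Then the solution of the $T$-system with initial data $T_{i,j,(i+j+1\bmod2)}=t_{i,j}$ is $$T_{i,j,k}=u_{k-1,\frac{i-j+k-1}{2}}\;v_{k-2,\frac{i-j+k-1}{2}}\;\theta_{i,j,k}\qquad(i,j\in\mathbb{Z},\ k\ge0,\ i+j+k\equiv1\pmod2).$$ Moreover, for $k\ge1$ and $i+j+k\equiv0\pmod2$, the ratio $L_{i,j,k}=\frac{T_{i+1,j,k}T_{i-1,j,k}}{T_{i,j,k+1}T_{i,j,k-1}}$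 is given by: if $k$ is even, with $\alpha=\frac{i-j}{2}$: $L_{i,j,k}=\frac{a_\alpha b_{\alpha-1}}{a_\alpha b_{\alpha-1}+a_{\alpha-1}b_\alpha}$ when $i+j+k\equiv0\pmod4$ and $L_{i,j,k}=\frac{a_{\alpha-1}b_{\alpha}}{a_\alpha b_{\alpha-1}+a_{\alpha-1}b_\alpha}$ when $i+j+k\equiv2\pmod4$; if $k$ is odd, with $\beta=\frac{i-j-1}{2}$: $L_{i,j,k}=\frac{c_{\beta+1}d_\beta}{c_\beta d_{\beta+1}+c_{\beta+1}d_\beta}$ when $i+j+k\equiv0\pmod4$ and $L_{i,j,k}=\frac{c_\beta d_{\beta+1}}{c_\beta d_{\beta+1}+c_{\beta+1}d_\beta}$ when $i+j+k\equiv2\pmod4$; and $R_{i,j,k}=\frac{T_{i,j+1,k}T_{i,j-1,k}}{T_{i,j,k+1}T_{i,j,k-1}}=1-L_{i,j,k}$.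
   Context: The $T$-system is $T_{i,j,k+1}T_{i,j,k-1}=T_{i+1,j,k}T_{i-1,j,k}+T_{i,j+1,k}T_{i,j-1,k}$ for $k\ge1$, $i+j+k\equiv0\pmod2$, on points $(i,j,k)\in\mathbb{Z}^2\times\mathbb{Z}_{\ge0}$ with $i+j+k\equiv1\pmod2$, with initial data $T_{i,j,(i+j+1\bmod 2)}=t_{i,j}$. The exponents in $u_{n,i},v_{n,i}$ are nonnegative integers. *)

(* Defs.v *)
From Stdlib Require Import Reals ZArith Lia Lra.
Open Scope R_scope.

Fixpoint prod_upto (f : nat -> R) (N : nat) : R :=
  match N with
  | O => 1
  | S N' => prod_upto f N' * f N'
  end.

Section Seqs.
Variable t : Z -> Z -> R.

Definition aa (i : Z) : R := t (i + 1)%Z (- i)%Z.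
Definition bb (i : Z) : R := t (i + 2)%Z (- i + 1)%Z.
Definition cc (i : Z) : R := t i (- i)%Z.
Definition dd (i : Z) : R := t (i + 1)%Z (- i + 1)%Z.

Definition xx (i : Z) : R :=
  (cc i * dd (i + 1)%Z + cc (i + 1)%Z * dd i) / (aa i * bb i).
Definition yy (i : Z) : R :=
  (aa (i - 1)%Z * bb i + aa i * bb (i - 1)%Z) / (cc i * dd i).

(* exponent (n+1)/2 - |(n-1)/2 - l|, written as ((n+1) - |n-1-2l|)/2,
   which is an exact nonnegative integer for 0 <= l <= n-1 *)
Definition expo (n l : Z) : nat :=
  Z.to_nat (((n + 1) - Z.abs (n - 1 - 2 * l)) / 2)%Z.

(* u_{n,i} for n >= 1; u_{n,i} = 1 for n <= 0 (used for n = 0,-1,-2) *)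
Definition uu (n i : Z) : R :=
  if (n <=? 0)%Z then 1 else
  prod_upto (fun l : nat =>
    xx (i - Z.of_nat l - 1)%Z ^ expo n (Z.of_nat l)) (Z.to_nat n).

Definition vv (n i : Z) : R :=
  if (n <=? 0)%Z then 1 else
  prod_upto (fun l : nat =>
    yy (i - Z.of_nat l - 1)%Z ^ expo n (Z.of_nat l)) (Z.to_nat n).

Definition theta (i j k : Z) : R := t (i + k / 2)%Z (j + k / 2)%Z.
End Seqs.

Definition is_T_solution (t : Z -> Z -> R) (T : Z -> Z -> Z -> R) : Prop :=
  (forall i j : Z, T i j ((i + j + 1) mod 2)%Z = t i j) /\
  (forall i j k : Z, (1 <= k)%Z -> Z.even (i + j + k) = true ->
     T i j (k + 1)%Z * T i j (k - 1)%Z =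
     T (i + 1)%Z j k * T (i - 1)%Z j k + T i (j + 1)%Z k * T i (j - 1)%Z k).

Definition Lratio (T : Z -> Z -> Z -> R) (i j k : Z) : R :=
  (T (i + 1)%Z j k * T (i - 1)%Z j k) / (T i j (k + 1)%Z * T i j (k - 1)%Z).
Definition Rratio (T : Z -> Z -> Z -> R) (i j k : Z) : R :=
  (T i (j + 1)%Z k * T i (j - 1)%Z k) / (T i j (k + 1)%Z * T i j (k - 1)%Z).

(* Main.v *)
Require Import Defs.
From Stdlib Require Import Reals ZArith Lia Lra.
Open Scope R_scope.

Lemma prod_ext (f g : nat -> R) N : (forall l, (l < N)%nat -> f l = g l) ->
  prod_upto f N = prod_upto g N.
Proof. induction N; intros H; simpl; auto.
  rewrite IHN by (intros; apply H; lia). rewrite H by lia. reflexivity. Qed.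

Lemma prod_mul (f g : nat -> R) N :
  prod_upto (fun l => f l * g l) N = prod_upto f N * prod_upto g N.
Proof. induction N; simpl. ring. rewrite IHN. ring. Qed.

Lemma prod_shift (f : nat -> R) N :
  prod_upto f (S N) = f 0%nat * prod_upto (fun l => f (S l)) N.
Proof. induction N. simpl. ring. 
  change (prod_upto f (S (S N))) with (prod_upto f (S N) * f (S N)).
  rewrite IHN. simpl. ring. Qed.

Lemma prod_pos (f : nat -> R) N : (forall l, 0 < f l) -> 0 < prod_upto f N.
Proof. intros H; induction N; simpl. lra. apply Rmult_lt_0_compat; auto. Qed.

Lemma prod_S (f : nat -> R) N : prod_upto f (S N) = prod_upto f N * f N.
Proof. reflexivity. Qed.

Definition Pz (z : Z -> R) (n i : Z) : R :=
  if (n <=? 0)%Z then 1 else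
  prod_upto (fun l : nat => z (i - Z.of_nat l - 1)%Z ^ expo n (Z.of_nat l)) (Z.to_nat n).

Definition SZ (z : Z -> R) (i n : Z) : R :=
  prod_upto (fun l : nat => z (i - Z.of_nat l - 1)%Z) (Z.to_nat n).

Lemma Pz_pos z n i : (forall r, 0 < z r) -> 0 < Pz z n i.
Proof. intros H. unfold Pz. destruct (n <=? 0)%Z. lra.
  apply prod_pos. intros; apply pow_lt; auto. Qed.

Lemma Pz_le0 z n i : (n <= 0)%Z -> Pz z n i = 1.
Proof. intros H. unfold Pz. replace (n <=? 0)%Z with true; auto. symmetry; apply Z.leb_le; auto. Qed.

Lemma SZ_succ z i n m : (0 <= n)%Z -> m = (n + 1)%Z -> SZ z i m = SZ z i n * z (i - n - 1)%Z.
Proof. intros Hn Hm. subst m. unfold SZ. rewrite Z2Nat.inj_add by lia.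
  rewrite Nat.add_1_r. simpl. rewrite Z2Nat.id by lia. reflexivity. Qed.

Lemma expo_0 n : (1 <= n)%Z -> expo n 0 = 1%nat.
Proof. intros H. unfold expo. replace (Z.abs (n - 1 - 2 * 0)) with (n-1)%Z by lia.
  replace (n + 1 - (n - 1))%Z with 2%Z by lia. reflexivity. Qed.

Lemma expo_N (N : Z) : (0 <= N)%Z -> expo N N = 0%nat.
Proof. intros H. unfold expo. replace (Z.abs (N - 1 - 2 * N)) with (N+1)%Z by lia.
  replace (N + 1 - (N + 1))%Z with 0%Z by lia. reflexivity. Qed.

Lemma expo_S (N l : Z) : (0 <= l <= N)%Z -> expo (N + 2) (l + 1) = S (expo N l).
Proof. intros H. unfold expo.
  replace (N + 2 + 1 - Z.abs (N + 2 - 1 - 2 * (l + 1)))%Z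
    with ((N + 1 - Z.abs (N - 1 - 2 * l)) + 1 * 2)%Z by lia.
  rewrite Z.div_add by lia. rewrite Z2Nat.inj_add; [simpl; lia| |lia].
  apply Z.div_pos; lia. Qed.

Lemma Pz_rec z n m i : (-2 <= n)%Z -> m = (n + 2)%Z ->
  Pz z m i = Pz z n (i - 1) * SZ z i m.
Proof. intros Hn Hm. subst m.
  destruct (Z.eq_dec n (-2)) as [E|E]. subst. rewrite !Pz_le0 by lia. unfold SZ. simpl. ring.
  destruct (Z.eq_dec n (-1)) as [E'|E']. subst. rewrite (Pz_le0 _ (-1)) by lia.
   unfold Pz, SZ. simpl. ring.
  assert (Hn0 : (0 <= n)%Z) by lia.
  unfold Pz at 1. replace (n + 2 <=? 0)%Z with false by (symmetry; apply Z.leb_gt; lia).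
  replace (Z.to_nat (n + 2)) with (S (S (Z.to_nat n))) by lia.
  rewrite prod_shift. unfold SZ. replace (Z.to_nat (n + 2)) with (S (S (Z.to_nat n))) by lia.
  rewrite (prod_shift _ (S (Z.to_nat n))).
  rewrite expo_0 by lia. rewrite pow_1.
  erewrite prod_ext.
  2:{ intros l Hl. rewrite Nat2Z.inj_succ, <- Z.add_1_r, expo_S by lia. simpl pow.
      replace (i - (Z.of_nat l + 1) - 1)%Z with (i - 1 - Z.of_nat l - 1)%Z by lia.
      reflexivity. }
  rewrite (prod_mul (fun l => z (i - 1 - Z.of_nat l - 1)%Z)).
  rewrite (prod_S (fun l => z (i - 1 - Z.of_nat l - 1)%Z ^ expo n (Z.of_nat l))).
  rewrite Z2Nat.id, expo_N, pow_O by lia.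
  replace (prod_upto (fun l : nat => z (i - Z.of_nat (S l) - 1)%Z) (S (Z.to_nat n)))
    with (prod_upto (fun l : nat => z (i - 1 - Z.of_nat l - 1)%Z) (S (Z.to_nat n))).
  2:{ apply prod_ext. intros. f_equal. lia. }
  unfold Pz. destruct (n <=? 0)%Z eqn:En.
  - assert (n = 0)%Z by (apply Z.leb_le in En; lia). subst. simpl.
    replace (i - 0 - 1)%Z with (i - 1)%Z by lia. ring.
  - replace (i - Z.of_nat 0 - 1)%Z with (i - 1)%Z by lia. ring.
Qed.

Lemma SZ_two z p n : (0 <= n)%Z ->
  SZ z p (n + 1) * SZ z (p - 1) (n + 1) = SZ z p (n + 2) * SZ z (p - 1) n.
Proof. intros Hn.
  rewrite (SZ_succ z p (n+1) (n+2)) by lia.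
  rewrite (SZ_succ z (p-1) n (n+1)) by lia.
  replace (p - 1 - n - 1)%Z with (p - (n + 1) - 1)%Z by lia. ring. Qed.

Lemma Pz_odd z : forall q, (0 <= q)%Z -> forall p,
  Pz z (2*q-1) p * Pz z (2*q-1) (p-1) = Pz z (2*q) p * Pz z (2*q-2) (p-1).
Proof.
  intros q Hq; pattern q; revert q Hq; apply natlike_ind.
  - intros p. rewrite !Pz_le0 by lia. ring.
  - intros q Hq IH p.
    rewrite (Pz_rec z (2*q-1) (2*Z.succ q - 1) p) by lia.
    rewrite (Pz_rec z (2*q-1) (2*Z.succ q - 1) (p-1)) by lia.
    rewrite (Pz_rec z (2*q) (2*Z.succ q) p) by lia.
    rewrite (Pz_rec z (2*q-2) (2*Z.succ q - 2) (p-1)) by lia.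
    replace (2 * Z.succ q - 1)%Z with (2*q + 1)%Z by lia.
    replace (2 * Z.succ q - 2)%Z with (2*q)%Z by lia.
    replace (2 * Z.succ q)%Z with (2*q + 2)%Z by lia.
    transitivity (Pz z (2 * q - 1) (p - 1) * Pz z (2 * q - 1) (p - 1 - 1) *
      (SZ z p (2 * q + 1) * SZ z (p - 1) (2 * q + 1))). ring.
    rewrite IH. rewrite SZ_two by lia. ring.
Qed.

Lemma Pz_even z : forall q, (0 <= q)%Z -> forall p,
  Pz z (2*q) p * Pz z (2*q) (p-1) * z (p-1-q)%Z = Pz z (2*q+1) p * Pz z (2*q-1) (p-1).
Proof.
  intros q Hq; pattern q; revert q Hq; apply natlike_ind.
  - intros p. rewrite (Pz_le0 _ (2*0)), (Pz_le0 _ (2*0)), (Pz_le0 _ (2*0-1)) by lia.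
    unfold Pz. simpl. replace (p - 0 - 1)%Z with (p-1-0)%Z by lia. ring.
  - intros q Hq IH p.
    rewrite (Pz_rec z (2*q) (2*Z.succ q) p) by lia.
    rewrite (Pz_rec z (2*q) (2*Z.succ q) (p-1)) by lia.
    rewrite (Pz_rec z (2*q+1) (2*Z.succ q + 1) p) by lia.
    rewrite (Pz_rec z (2*q-1) (2*Z.succ q - 1) (p-1)) by lia.
    replace (2 * Z.succ q - 1)%Z with (2*q + 1)%Z by lia.
    replace (2 * Z.succ q + 1)%Z with (2*q + 1 + 2)%Z by lia.
    replace (2 * Z.succ q)%Z with (2*q + 1 + 1)%Z by lia.
    replace (p - 1 - Z.succ q)%Z with (p - 1 - 1 - q)%Z by lia.
    transitivity (Pz z (2 * q) (p - 1) * Pz z (2 * q) (p - 1 - 1) * z (p-1-1-q)%Z *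
      (SZ z p (2 * q + 1 + 1) * SZ z (p - 1) (2 * q + 1 + 1))). ring.
    rewrite IH. rewrite SZ_two by lia. ring.
Qed.

Lemma alg_e (U1 U2 U3 U4 V1 V2 V3 V4 A B C D y L : R) :
  U1*U2 = U3*U4 -> V1*V2*y = V3*V4 -> A*B = L*y*(C*D) ->
  U1*V1*A*(U2*V2*B) = L*(U3*V3*C*(U4*V4*D)).
Proof. intros H1 H2 H3.
  transitivity (U1*U2*(V1*V2)*(A*B)); [ring|]. rewrite H3.
  transitivity (L*(U1*U2)*(V1*V2*y)*(C*D)); [ring|]. rewrite H1, H2. ring. Qed.

Lemma alg_o (U1 U2 U3 U4 V1 V2 V3 V4 A B C D y L : R) :
  U1*U2*y = U3*U4 -> V1*V2 = V3*V4 -> A*B = L*y*(C*D) ->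
  U1*V1*A*(U2*V2*B) = L*(U3*V3*C*(U4*V4*D)).
Proof. intros H1 H2 H3.
  transitivity (U1*U2*(V1*V2)*(A*B)); [ring|]. rewrite H3.
  transitivity (L*(U1*U2*y)*(V1*V2)*(C*D)); [ring|]. rewrite H1, H2. ring. Qed.

Lemma div2_eq (a b r : Z) : (0 <= r < 2)%Z -> a = (2*b + r)%Z -> (a / 2)%Z = b.
Proof. intros. symmetry. apply (Z.div_unique_pos a 2 b r); lia. Qed.

Lemma mod4_eq (a b r : Z) : (0 <= r < 4)%Z -> a = (4*b + r)%Z -> (a mod 4)%Z = r.
Proof. intros. symmetry. apply (Z.mod_unique_pos a 4 b r); lia. Qed.

Section S.
Variable t : Z -> Z -> R.
Hypothesis Ht : forall i j, 0 < t i j.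
Hypothesis Hp2 : forall i j : Z, t (i + 2)%Z (j + 2)%Z = t i j.

Lemma tper_nat (n : nat) : forall a b, t (a + 2 * Z.of_nat n)%Z (b + 2 * Z.of_nat n)%Z = t a b.
Proof. induction n; intros a b. simpl. rewrite !Z.add_0_r. reflexivity.
  rewrite Nat2Z.inj_succ. rewrite <- (IHn a b). rewrite <- (Hp2 (a + 2 * Z.of_nat n)%Z). f_equal; lia. Qed.

Lemma tper c a b : t (a + 2 * c)%Z (b + 2 * c)%Z = t a b.
Proof. destruct (Z_le_gt_dec 0 c).
  - rewrite <- (Z2Nat.id c) by lia. apply tper_nat.
  - rewrite <- (tper_nat (Z.to_nat (-c)) (a + 2*c) (b + 2*c)). f_equal; lia. Qed.

Definition FF (i j k : Z) : R :=
  Pz (xx t) (k - 1)%Z ((i - j + k - 1) / 2)%Z * Pz (yy t) (k - 2)%Z ((i - j + k - 1) / 2)%Z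
  * theta t i j k.

Lemma F_even i j k e n1 n2 h : (i - j + k - 1 = 2*e)%Z -> n1 = (k-1)%Z -> n2 = (k-2)%Z ->
  k = (2*h)%Z -> FF i j k = Pz (xx t) n1 e * Pz (yy t) n2 e * t (i + h)%Z (j + h)%Z.
Proof. intros H1 H2 H3 H4. subst n1 n2. unfold FF, theta.
  rewrite (div2_eq _ e 0) by lia. rewrite (div2_eq k h 0) by lia. reflexivity. Qed.

Lemma F_odd i j k e n1 n2 h : (i - j + k - 1 = 2*e)%Z -> n1 = (k-1)%Z -> n2 = (k-2)%Z ->
  k = (2*h+1)%Z -> FF i j k = Pz (xx t) n1 e * Pz (yy t) n2 e * t (i + h)%Z (j + h)%Z.
Proof. intros H1 H2 H3 H4. subst n1 n2. unfold FF, theta.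
  rewrite (div2_eq _ e 0) by lia. rewrite (div2_eq k h 1) by lia. reflexivity. Qed.

Ltac tp c := unfold aa, bb, cc, dd; rewrite <- (tper c); f_equal; lia.
Ltac pos := unfold aa, bb, cc, dd;
  repeat (apply Rmult_lt_0_compat || apply Rplus_lt_0_compat || apply Rinv_0_lt_compat);
  apply Ht.
Ltac nz := apply Rgt_not_eq; pos.

Lemma caseE0 i j k al q h : (1 <= h)%Z -> i = (al + 2*q - h)%Z -> j = (-al + 2*q - h)%Z ->
  k = (2*h)%Z ->
  let Lv := aa t al * bb t (al - 1)%Z / (aa t al * bb t (al - 1)%Z + aa t (al - 1)%Z * bb t al) in
  FF (i+1)%Z j k * FF (i-1)%Z j k = Lv * (FF i j (k+1)%Z * FF i j (k-1)%Z) /\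
  FF i (j+1)%Z k * FF i (j-1)%Z k = (1 - Lv) * (FF i j (k+1)%Z * FF i j (k-1)%Z).
Proof. intros Hh Hi Hj Hk Lv.
  rewrite (F_odd i j (k+1) (al+h) (2*h) (2*(h-1)+1) h) by lia.
  rewrite (F_odd i j (k-1) (al+h-1) (2*h-2) (2*(h-1)-1) (h-1)) by lia.
  assert (Hu := Pz_odd (xx t) h ltac:(lia) (al+h)).
  assert (Hv := Pz_even (yy t) (h-1) ltac:(lia) (al+h)).
  replace (al + h - 1 - (h - 1))%Z with al in Hv by lia.
  assert (Ha : 0 < aa t al) by pos. assert (Hb : 0 < bb t al) by pos.
  assert (Ha' : 0 < aa t (al-1)) by pos. assert (Hb' : 0 < bb t (al-1)) by pos.
  assert (Hc : 0 < cc t al) by pos. assert (Hd : 0 < dd t al) by pos.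
  split.
  - rewrite (F_even (i+1) j k (al+h) (2*h-1) (2*(h-1)) h) by lia.
    rewrite (F_even (i-1) j k (al+h-1) (2*h-1) (2*(h-1)) h) by lia.
    apply (alg_e _ _ _ _ _ _ _ _ _ _ _ _ _ _ Hu Hv).
    replace (t (i + 1 + h)%Z (j + h)%Z) with (aa t al) by tp q.
    replace (t (i - 1 + h)%Z (j + h)%Z) with (bb t (al - 1)) by tp (q-1)%Z.
    replace (t (i + h)%Z (j + h)%Z) with (cc t al) by tp q.
    replace (t (i + (h - 1))%Z (j + (h - 1))%Z) with (dd t al) by tp (q-1)%Z.
    unfold Lv, yy. field; repeat split; nz.
  - rewrite (Rmult_comm (FF i (j+1) k)).
    rewrite (F_even i (j-1) k (al+h) (2*h-1) (2*(h-1)) h) by lia.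
    rewrite (F_even i (j+1) k (al+h-1) (2*h-1) (2*(h-1)) h) by lia.
    apply (alg_e _ _ _ _ _ _ _ _ _ _ _ _ _ _ Hu Hv).
    replace (t (i + h)%Z (j - 1 + h)%Z) with (bb t al) by tp (q-1)%Z.
    replace (t (i + h)%Z (j + 1 + h)%Z) with (aa t (al - 1)) by tp q.
    replace (t (i + h)%Z (j + h)%Z) with (cc t al) by tp q.
    replace (t (i + (h - 1))%Z (j + (h - 1))%Z) with (dd t al) by tp (q-1)%Z.
    unfold Lv, yy. field; repeat split; nz.
Qed.

Lemma caseE2 i j k al q h : (1 <= h)%Z -> i = (al + 2*q + 1 - h)%Z -> j = (-al + 2*q + 1 - h)%Z ->
  k = (2*h)%Z ->
  let Lv := aa t (al - 1)%Z * bb t al / (aa t al * bb t (al - 1)%Z + aa t (al - 1)%Z * bb t al) in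
  FF (i+1)%Z j k * FF (i-1)%Z j k = Lv * (FF i j (k+1)%Z * FF i j (k-1)%Z) /\
  FF i (j+1)%Z k * FF i (j-1)%Z k = (1 - Lv) * (FF i j (k+1)%Z * FF i j (k-1)%Z).
Proof. intros Hh Hi Hj Hk Lv.
  rewrite (F_odd i j (k+1) (al+h) (2*h) (2*(h-1)+1) h) by lia.
  rewrite (F_odd i j (k-1) (al+h-1) (2*h-2) (2*(h-1)-1) (h-1)) by lia.
  assert (Hu := Pz_odd (xx t) h ltac:(lia) (al+h)).
  assert (Hv := Pz_even (yy t) (h-1) ltac:(lia) (al+h)).
  replace (al + h - 1 - (h - 1))%Z with al in Hv by lia.
  assert (Ha : 0 < aa t al) by pos. assert (Hb : 0 < bb t al) by pos.
  assert (Ha' : 0 < aa t (al-1)) by pos. assert (Hb' : 0 < bb t (al-1)) by pos.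
  assert (Hc : 0 < cc t al) by pos. assert (Hd : 0 < dd t al) by pos.
  split.
  - rewrite (F_even (i+1) j k (al+h) (2*h-1) (2*(h-1)) h) by lia.
    rewrite (F_even (i-1) j k (al+h-1) (2*h-1) (2*(h-1)) h) by lia.
    apply (alg_e _ _ _ _ _ _ _ _ _ _ _ _ _ _ Hu Hv).
    replace (t (i + 1 + h)%Z (j + h)%Z) with (bb t al) by tp q.
    replace (t (i - 1 + h)%Z (j + h)%Z) with (aa t (al - 1)) by tp q.
    replace (t (i + h)%Z (j + h)%Z) with (dd t al) by tp q.
    replace (t (i + (h - 1))%Z (j + (h - 1))%Z) with (cc t al) by tp q.
    unfold Lv, yy. field; repeat split; nz.
  - rewrite (Rmult_comm (FF i (j+1) k)).
    rewrite (F_even i (j-1) k (al+h) (2*h-1) (2*(h-1)) h) by lia.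
    rewrite (F_even i (j+1) k (al+h-1) (2*h-1) (2*(h-1)) h) by lia.
    apply (alg_e _ _ _ _ _ _ _ _ _ _ _ _ _ _ Hu Hv).
    replace (t (i + h)%Z (j - 1 + h)%Z) with (aa t al) by tp q.
    replace (t (i + h)%Z (j + 1 + h)%Z) with (bb t (al - 1)) by tp q.
    replace (t (i + h)%Z (j + h)%Z) with (dd t al) by tp q.
    replace (t (i + (h - 1))%Z (j + (h - 1))%Z) with (cc t al) by tp q.
    unfold Lv, yy. field; repeat split; nz.
Qed.

Lemma caseO0 i j k be q h : (0 <= h)%Z -> i = (2*q + be - h)%Z -> j = (2*q - be - 1 - h)%Z ->
  k = (2*h+1)%Z ->
  let Lv := cc t (be + 1)%Z * dd t be / (cc t be * dd t (be + 1)%Z + cc t (be + 1)%Z * dd t be) in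
  FF (i+1)%Z j k * FF (i-1)%Z j k = Lv * (FF i j (k+1)%Z * FF i j (k-1)%Z) /\
  FF i (j+1)%Z k * FF i (j-1)%Z k = (1 - Lv) * (FF i j (k+1)%Z * FF i j (k-1)%Z).
Proof. intros Hh Hi Hj Hk Lv.
  rewrite (F_even i j (k+1) (be+h+1) (2*h+1) (2*h) (h+1)) by lia.
  rewrite (F_even i j (k-1) (be+h+1-1) (2*h-1) (2*h-2) h) by lia.
  assert (Hu := Pz_even (xx t) h ltac:(lia) (be+h+1)).
  assert (Hv := Pz_odd (yy t) h ltac:(lia) (be+h+1)).
  replace (be + h + 1 - 1 - h)%Z with be in Hu by lia.
  assert (Ha : 0 < aa t be) by pos. assert (Hb : 0 < bb t be) by pos.
  assert (Hc' : 0 < cc t (be+1)) by pos. assert (Hd' : 0 < dd t (be+1)) by pos.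
  assert (Hc : 0 < cc t be) by pos. assert (Hd : 0 < dd t be) by pos.
  split.
  - rewrite (F_odd (i+1) j k (be+h+1) (2*h) (2*h-1) h) by lia.
    rewrite (F_odd (i-1) j k (be+h+1-1) (2*h) (2*h-1) h) by lia.
    apply (alg_o _ _ _ _ _ _ _ _ _ _ _ _ _ _ Hu Hv).
    replace (t (i + 1 + h)%Z (j + h)%Z) with (cc t (be + 1)) by tp q.
    replace (t (i - 1 + h)%Z (j + h)%Z) with (dd t be) by tp (q-1)%Z.
    replace (t (i + (h + 1))%Z (j + (h + 1))%Z) with (aa t be) by tp q.
    replace (t (i + h)%Z (j + h)%Z) with (bb t be) by tp (q-1)%Z.
    unfold Lv, xx. field; repeat split; nz.
  - rewrite (Rmult_comm (FF i (j+1) k)).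
    rewrite (F_odd i (j-1) k (be+h+1) (2*h) (2*h-1) h) by lia.
    rewrite (F_odd i (j+1) k (be+h+1-1) (2*h) (2*h-1) h) by lia.
    apply (alg_o _ _ _ _ _ _ _ _ _ _ _ _ _ _ Hu Hv).
    replace (t (i + h)%Z (j - 1 + h)%Z) with (dd t (be + 1)) by tp (q-1)%Z.
    replace (t (i + h)%Z (j + 1 + h)%Z) with (cc t be) by tp q.
    replace (t (i + (h + 1))%Z (j + (h + 1))%Z) with (aa t be) by tp q.
    replace (t (i + h)%Z (j + h)%Z) with (bb t be) by tp (q-1)%Z.
    unfold Lv, xx. field; repeat split; nz.
Qed.

Lemma caseO2 i j k be q h : (0 <= h)%Z -> i = (2*q + 1 + be - h)%Z -> j = (2*q - be - h)%Z ->
  k = (2*h+1)%Z ->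
  let Lv := cc t be * dd t (be + 1)%Z / (cc t be * dd t (be + 1)%Z + cc t (be + 1)%Z * dd t be) in
  FF (i+1)%Z j k * FF (i-1)%Z j k = Lv * (FF i j (k+1)%Z * FF i j (k-1)%Z) /\
  FF i (j+1)%Z k * FF i (j-1)%Z k = (1 - Lv) * (FF i j (k+1)%Z * FF i j (k-1)%Z).
Proof. intros Hh Hi Hj Hk Lv.
  rewrite (F_even i j (k+1) (be+h+1) (2*h+1) (2*h) (h+1)) by lia.
  rewrite (F_even i j (k-1) (be+h+1-1) (2*h-1) (2*h-2) h) by lia.
  assert (Hu := Pz_even (xx t) h ltac:(lia) (be+h+1)).
  assert (Hv := Pz_odd (yy t) h ltac:(lia) (be+h+1)).
  replace (be + h + 1 - 1 - h)%Z with be in Hu by lia.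
  assert (Ha : 0 < aa t be) by pos. assert (Hb : 0 < bb t be) by pos.
  assert (Hc' : 0 < cc t (be+1)) by pos. assert (Hd' : 0 < dd t (be+1)) by pos.
  assert (Hc : 0 < cc t be) by pos. assert (Hd : 0 < dd t be) by pos.
  split.
  - rewrite (F_odd (i+1) j k (be+h+1) (2*h) (2*h-1) h) by lia.
    rewrite (F_odd (i-1) j k (be+h+1-1) (2*h) (2*h-1) h) by lia.
    apply (alg_o _ _ _ _ _ _ _ _ _ _ _ _ _ _ Hu Hv).
    replace (t (i + 1 + h)%Z (j + h)%Z) with (dd t (be + 1)) by tp q.
    replace (t (i - 1 + h)%Z (j + h)%Z) with (cc t be) by tp q.
    replace (t (i + (h + 1))%Z (j + (h + 1))%Z) with (bb t be) by tp q.
    replace (t (i + h)%Z (j + h)%Z) with (aa t be) by tp q.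
    unfold Lv, xx. field; repeat split; nz.
  - rewrite (Rmult_comm (FF i (j+1) k)).
    rewrite (F_odd i (j-1) k (be+h+1) (2*h) (2*h-1) h) by lia.
    rewrite (F_odd i (j+1) k (be+h+1-1) (2*h) (2*h-1) h) by lia.
    apply (alg_o _ _ _ _ _ _ _ _ _ _ _ _ _ _ Hu Hv).
    replace (t (i + h)%Z (j - 1 + h)%Z) with (cc t (be + 1)) by tp q.
    replace (t (i + h)%Z (j + 1 + h)%Z) with (dd t be) by tp q.
    replace (t (i + (h + 1))%Z (j + (h + 1))%Z) with (bb t be) by tp q.
    replace (t (i + h)%Z (j + h)%Z) with (aa t be) by tp q.
    unfold Lv, xx. field; repeat split; nz.
Qed.
End S.

Definition Lexp (t : Z -> Z -> R) (i j k : Z) : R :=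
  if Z.even k then
    let al := ((i - j) / 2)%Z in
    if ((i + j + k) mod 4 =? 0)%Z then
      aa t al * bb t (al - 1)%Z / (aa t al * bb t (al - 1)%Z + aa t (al - 1)%Z * bb t al)
    else aa t (al - 1)%Z * bb t al / (aa t al * bb t (al - 1)%Z + aa t (al - 1)%Z * bb t al)
  else
    let be := ((i - j - 1) / 2)%Z in
    if ((i + j + k) mod 4 =? 0)%Z then
      cc t (be + 1)%Z * dd t be / (cc t be * dd t (be + 1)%Z + cc t (be + 1)%Z * dd t be)
    else cc t be * dd t (be + 1)%Z / (cc t be * dd t (be + 1)%Z + cc t (be + 1)%Z * dd t be).

Lemma eo a b : Z.even a = true -> (b = a + 1 \/ b = a - 1)%Z -> Z.odd b = true.
Proof. intros H H2. apply Z.odd_spec. destruct (proj1 (Z.even_spec a) H) as [s Hs].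
  destruct H2; [exists s | exists (s-1)%Z]; lia. Qed.

Lemma oe a b : Z.odd a = true -> (b = a + 1 \/ b = a - 1)%Z -> Z.even b = true.
Proof. intros H H2. apply Z.even_spec. destruct (proj1 (Z.odd_spec a) H) as [s Hs].
  destruct H2; [exists (s+1)%Z | exists s]; lia. Qed.

Section S2.
Variable t : Z -> Z -> R.
Hypothesis Ht : forall i j, 0 < t i j.
Hypothesis Hp2 : forall i j : Z, t (i + 2)%Z (j + 2)%Z = t i j.

Lemma key i j k : (1 <= k)%Z -> Z.even (i + j + k) = true ->
  FF t (i+1)%Z j k * FF t (i-1)%Z j k = Lexp t i j k * (FF t i j (k+1)%Z * FF t i j (k-1)%Z) /\
  FF t i (j+1)%Z k * FF t i (j-1)%Z k = (1 - Lexp t i j k) * (FF t i j (k+1)%Z * FF t i j (k-1)%Z).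
Proof. intros Hk He.
  destruct (proj1 (Z.even_spec _) He) as [s Hs].
  destruct (Z.Even_or_Odd s) as [[q Hq]|[q Hq]]; destruct (Z.Even_or_Odd k) as [[h Hh]|[h Hh]].
  - assert (Ek : Z.even k = true) by (apply Z.even_spec; exists h; lia).
    assert (Hd : ((i - j) / 2)%Z = (2*q - j - h)%Z) by (apply (div2_eq _ _ 0); lia).
    assert (Hm : ((i + j + k) mod 4)%Z = 0%Z) by (apply (mod4_eq _ q); lia).
    pose proof (caseE0 t Ht Hp2 i j k (2*q - j - h) q h ltac:(lia) ltac:(lia) ltac:(lia) ltac:(lia)) as H.
    cbv zeta in H. unfold Lexp. rewrite Ek, Hm. cbv zeta. rewrite Hd. exact H.
  - assert (Ek : Z.even k = false) by (rewrite <- Z.negb_odd; replace (Z.odd k) with true; [reflexivity|]; symmetry; apply Z.odd_spec; exists h; lia).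
    assert (Hd : ((i - j - 1) / 2)%Z = (i + h - 2*q)%Z) by (apply (div2_eq _ _ 0); lia).
    assert (Hm : ((i + j + k) mod 4)%Z = 0%Z) by (apply (mod4_eq _ q); lia).
    pose proof (caseO0 t Ht Hp2 i j k (i + h - 2*q) q h ltac:(lia) ltac:(lia) ltac:(lia) ltac:(lia)) as H.
    cbv zeta in H. unfold Lexp. rewrite Ek, Hm. cbv zeta. rewrite Hd. exact H.
  - assert (Ek : Z.even k = true) by (apply Z.even_spec; exists h; lia).
    assert (Hd : ((i - j) / 2)%Z = (i + h - 2*q - 1)%Z) by (apply (div2_eq _ _ 0); lia).
    assert (Hm : ((i + j + k) mod 4)%Z = 2%Z) by (apply (mod4_eq _ q); lia).
    pose proof (caseE2 t Ht Hp2 i j k (i + h - 2*q - 1) q h ltac:(lia) ltac:(lia) ltac:(lia) ltac:(lia)) as H.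
    cbv zeta in H. unfold Lexp. rewrite Ek, Hm. cbv zeta. rewrite Hd. exact H.
  - assert (Ek : Z.even k = false) by (rewrite <- Z.negb_odd; replace (Z.odd k) with true; [reflexivity|]; symmetry; apply Z.odd_spec; exists h; lia).
    assert (Hd : ((i - j - 1) / 2)%Z = (i + h - 2*q - 1)%Z) by (apply (div2_eq _ _ 0); lia).
    assert (Hm : ((i + j + k) mod 4)%Z = 2%Z) by (apply (mod4_eq _ q); lia).
    pose proof (caseO2 t Ht Hp2 i j k (i + h - 2*q - 1) q h ltac:(lia) ltac:(lia) ltac:(lia) ltac:(lia)) as H.
    cbv zeta in H. unfold Lexp. rewrite Ek, Hm. cbv zeta. rewrite Hd. exact H.
Qed.

Lemma xx_pos r : 0 < xx t r.
Proof. unfold xx, aa, bb, cc, dd.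
  repeat (apply Rmult_lt_0_compat || apply Rplus_lt_0_compat || apply Rinv_0_lt_compat); apply Ht. Qed.
Lemma yy_pos r : 0 < yy t r.
Proof. unfold yy, aa, bb, cc, dd.
  repeat (apply Rmult_lt_0_compat || apply Rplus_lt_0_compat || apply Rinv_0_lt_compat); apply Ht. Qed.

Lemma FF_pos i j k : 0 < FF t i j k.
Proof. unfold FF, theta. repeat apply Rmult_lt_0_compat; auto using Pz_pos, xx_pos, yy_pos. Qed.

Definition Qk (T : Z -> Z -> Z -> R) (k : Z) :=
  forall i j, Z.odd (i + j + k) = true -> T i j k = FF t i j k.

Lemma uniq T : is_T_solution t T -> forall n : nat, forall k, k = Z.of_nat n -> Qk T k /\ Qk T (k+1).
Proof. intros [H0 Hr]. induction n; intros k Hk.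
  - subst k. simpl. split; intros i j Ho.
    + assert (Hm : ((i + j + 1) mod 2)%Z = 0%Z).
      { destruct (proj1 (Z.odd_spec _) Ho) as [s Hs]. symmetry; apply (Z.mod_unique_pos _ _ (s+1)); lia. }
      specialize (H0 i j). rewrite Hm in H0. rewrite H0.
      unfold FF, theta. rewrite !Pz_le0 by lia. simpl ((0/2)%Z). rewrite !Z.add_0_r. ring.
    + assert (Hm : ((i + j + 1) mod 2)%Z = 1%Z).
      { destruct (proj1 (Z.odd_spec _) Ho) as [s Hs]. symmetry; apply (Z.mod_unique_pos _ _ s); lia. }
      specialize (H0 i j). rewrite Hm in H0. rewrite H0.
      unfold FF, theta. rewrite !Pz_le0 by lia. simpl ((1/2)%Z). rewrite !Z.add_0_r. ring.
  - destruct (IHn (k-1)%Z ltac:(lia)) as [Q0 Q1].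
    replace (k - 1 + 1)%Z with k in Q1 by lia.
    split; [exact Q1|]. intros i j Ho.
    assert (He : Z.even (i + j + k) = true) by (apply (oe _ _ Ho); lia).
    assert (Hk1 : (1 <= k)%Z) by lia.
    destruct (key i j k Hk1 He) as [KL KR].
    pose proof (Hr i j k Hk1 He) as R.
    rewrite (Q0 i j) in R by (apply (eo _ _ He); lia).
    rewrite (Q1 (i+1)%Z j), (Q1 (i-1)%Z j), (Q1 i (j+1)%Z), (Q1 i (j-1)%Z) in R
      by (apply (eo _ _ He); lia).
    rewrite KL, KR in R.
    apply (Rmult_eq_reg_r (FF t i j (k-1))). rewrite R. ring.
    apply Rgt_not_eq, FF_pos.
Qed.
End S2.

Theorem mainTheorem6 (m : Z) (t : Z -> Z -> R) (T : Z -> Z -> Z -> R) :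
  (1 <= m)%Z ->
  (forall i j : Z, 0 < t i j) ->
  (forall i j : Z, t (i + m)%Z (j - m)%Z = t i j) ->
  (forall i j : Z, t (i + 2)%Z (j + 2)%Z = t i j) ->
  is_T_solution t T ->
  (forall i j k : Z, (0 <= k)%Z -> Z.odd (i + j + k) = true ->
     T i j k = uu t (k - 1)%Z ((i - j + k - 1) / 2)%Z
               * vv t (k - 2)%Z ((i - j + k - 1) / 2)%Z
               * theta t i j k)
  /\
  (forall i j k : Z, (1 <= k)%Z -> Z.even (i + j + k) = true ->
     (Z.even k = true ->
        let al := ((i - j) / 2)%Z in
        (((i + j + k) mod 4 = 0)%Z ->
           Lratio T i j k = aa t al * bb t (al - 1)%Z /
             (aa t al * bb t (al - 1)%Z + aa t (al - 1)%Z * bb t al)) /\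
        (((i + j + k) mod 4 = 2)%Z ->
           Lratio T i j k = aa t (al - 1)%Z * bb t al /
             (aa t al * bb t (al - 1)%Z + aa t (al - 1)%Z * bb t al))) /\
     (Z.odd k = true ->
        let be := ((i - j - 1) / 2)%Z in
        (((i + j + k) mod 4 = 0)%Z ->
           Lratio T i j k = cc t (be + 1)%Z * dd t be /
             (cc t be * dd t (be + 1)%Z + cc t (be + 1)%Z * dd t be)) /\
        (((i + j + k) mod 4 = 2)%Z ->
           Lratio T i j k = cc t be * dd t (be + 1)%Z /
             (cc t be * dd t (be + 1)%Z + cc t (be + 1)%Z * dd t be))) /\
     Rratio T i j k = 1 - Lratio T i j k).
Proof.
  intros Hm Ht Hpm Hp2 HT.
  assert (HTF : forall i j k, (0 <= k)%Z -> Z.odd (i + j + k) = true -> T i j k = FF t i j k).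
  { intros i j k Hk Ho. destruct (uniq t Ht Hp2 T HT (Z.to_nat k) k ltac:(lia)) as [Q _].
    apply Q; auto. }
  split.
  { intros i j k Hk Ho. rewrite HTF by auto. reflexivity. }
  intros i j k Hk He.
  destruct (key t Ht Hp2 i j k Hk He) as [KL KR].
  assert (Hpos : 0 < FF t i j (k+1)%Z * FF t i j (k-1)%Z)
    by (apply Rmult_lt_0_compat; apply FF_pos; auto).
  assert (HL : Lratio T i j k = Lexp t i j k).
  { unfold Lratio. repeat (rewrite HTF; [| lia | apply (eo _ _ He); lia]).
    rewrite KL. field; repeat split; apply Rgt_not_eq, FF_pos; auto. }
  assert (HR : Rratio T i j k = 1 - Lexp t i j k).
  { unfold Rratio. repeat (rewrite HTF; [| lia | apply (eo _ _ He); lia]).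
    rewrite KR. field; repeat split; apply Rgt_not_eq, FF_pos; auto. }
  rewrite HR, HL. split; [|split; [|reflexivity]].
  - intros Hke al. unfold Lexp. rewrite Hke.
    split; intros Hmd; rewrite Hmd; reflexivity.
  - intros Hko be. unfold Lexp. rewrite <- Z.negb_even in Hko.
    destruct (Z.even k); [discriminate|].
    split; intros Hmd; rewrite Hmd; reflexivity.
Qed.
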